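(* Let $p\ge 2$, $m,L\in\mathbb{N}$ with $L\ge 1$, and let $z_1^{[0,T_1-1]},\dots,z_p^{[0,T_p-1]}$ be finite signal sequences with $z_i(k)\in\mathbb{R}^m$ and $T_i\ge L$. Then: 1) If $\{z_i^{[0,T_i-1]}\}_{i=1}^p$ are CCPE of order $L$ (so in particular $T_1=\dots=T_p=:T_0$), then they are also MCPE of order $L$, and also HCPE of order $L$ (for a split index $\bar p$, i.e. viewing $z_1,\dots,z_{\bar p}$ as the cumulative part and $z_{\bar p+1},\dots,z_p$ as the mosaic part). 2) Suppose $\{z_i^{[0,T_i-1]}\}_{i=1}^p$ are MCPE of order $L$. i) If $T_0=T_1=\dots=T_p$ and, for every choice of nonzero weights $\alpha_1,\dots,\alpha_p$, $\operatorname{im}\big(H_L^{mos}(\{z_i^{[0,T_i-1]}\}_{i=1}^p)^\top\big)\cap\operatorname{leftker}\big(\mathbf{1}_p\otimes I_{T_0-L+1}\big)=\{0\}$, then $\{z_i^{[0,T_i-1]}\}_{i=1}^p$ are also CCPE of order $L$. ii) If $T_0=T_1=\dots=T_{\bar p}$ for some $1\le\bar p<p$ and, for every choice of nonzero weights, $\operatorname{im}\big(H_L^{mos}(\{z_i^{[0,T_i-1]}\}_{i=1}^{p})^\top\big)\cap\operatorname{leftker}\Big(\begin{bmatrix}\mathbf{1}_{\bar p}\otimes I_{T_0-L+1}&0\\0&I_{S}\end{bmatrix}\Big)=\{0\}$ with $S=\sum_{i=\bar p+1}^p(T_i-L+1)$, then $\{z_i^{[0,T_i-1]}\}_{i=1}^p$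 are also HCPE of order $L$ (with cumulative part $z_1,\dots,z_{\bar p}$). 3) Suppose $\{z_i^{[0,T_i-1]}\}_{i=1}^p$ are HCPE of order $L$ with cumulative part $z_1,\dots,z_{\bar p}$ (common length $T_0$) and mosaic part $z_{\bar p+1},\dots,z_p$. Then i) $\{z_i^{[0,T_i-1]}\}_{i=1}^p$ are also MCPE of order $L$; ii) if moreover $T_0=T_{\bar p+1}=\dots=T_p$ and, for every choice of nonzero weights, $\operatorname{im}\big(H_L^{hyb}(\{z_i^{[0,T_i-1]}\}_{i=1}^p)^\top\big)\cap\operatorname{leftker}\big(\mathbf{1}_{p-\bar p+1}\otimes I_{T_0-L+1}\big)=\{0\}$, then $\{z_i^{[0,T_i-1]}\}_{i=1}^p$ are also CCPE of order $L$.
   Context: For a sequence $z^{[0,T-1]}=(z(0),\dots,z(T-1))$ with $z(k)\in\mathbb{R}^m$ and $L\le T$, the block Hankel matrix of order $L$ is $H_L(z^{[0,T-1]})\in\mathbb{R}^{mL\times(T-L+1)}$ whose $(r,c)$ block entry ($r=0,\dots,L-1$, $c=0,\dots,T-L$) is $z(r+c)$. Given nonzero real weights $\alpha_1,\dots,\alpha_p$: - $H_L^{mos}(\{z_i^{[0,T_i-1]}\}_{i=1}^p)=[\alpha_1H_L(z_1^{[0,T_1-1]})\ \cdots\ \alpha_pH_L(z_p^{[0,T_p-1]})]$; the signals are mosaic collectively persistently exciting (MCPE) of order $L$ if this matrix has full row rank $mL$ for every choice of nonzero $\alpha_i$. - If all lengths equal $T_0$: $H_L^{cum}(\{z_i^{[0,T_0-1]}\}_{i=1}^p)=\sum_{i=1}^p\alpha_iH_L(z_i^{[0,T_0-1]})$;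 the signals are cumulative collectively persistently exciting (CCPE) of order $L$ if this matrix has full row rank $mL$ for every choice of nonzero $\alpha_i$. - If $z_1,\dots,z_{\bar p}$ have common length $T_0$ and $z_{\bar p+1},\dots,z_p$ have lengths $T_i$: $H_L^{hyb}(\{z_i\}_{i=1}^p)=[\,H_L^{cum}(\{z_i^{[0,T_0-1]}\}_{i=1}^{\bar p})\ \ H_L^{mos}(\{z_i^{[0,T_i-1]}\}_{i=\bar p+1}^p)\,]$; the signals are hybrid collectively persistently exciting (HCPE) of order $L$ if this matrix has full row rank $mL$ for every choice of nonzero $\alpha_i$. For a matrix $M$, $\operatorname{leftker}M$ is the space of row vectors $v$ with $vM=0$; it is identified with a subspace of column vectors (by transposition) when intersected with $\operatorname{im}(H^\top)$. $\mathbf{1}_q$ is the all-ones column vector of length $q$, $\otimes$ the Kronecker product. *)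

(* Defs.v *)
From HB Require Import structures.
From mathcomp Require Import all_boot all_order all_algebra.
From mathcomp Require Import reals.
Set Implicit Arguments. Unset Strict Implicit. Unset Printing Implicit Defensive.
Import Order.TTheory GRing.Theory Num.Theory.
Local Open Scope ring_scope.

Section Defs.
Variable R : realType.

(* Row index = r*m + a (block row r, component a), via mxvec (row-major);
   column c; entry = (z (r+c)) a. *)
Definition hankel (m L T : nat) (z : nat -> 'cV[R]_m) : 'M[R]_(L * m, T - L + 1) :=
  (\matrix_(c < T - L + 1)
      mxvec (\matrix_(r < L, a < m) z (r + c)%N a ord0))^T.

(* "I" block of size n x k with ones on the diagonal (an identity matrix when
   n = k, which is the only case where it is used). *)
Definition eyemx (n k : nat) : 'M[R]_(n, k) := \matrix_(a, b) ((a : nat) == b)%:R.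

Lemma hyb_idx_subproof (pbar p : nat) (j : 'I_(p - pbar)) : (pbar + j < p)%N.
Proof. by have := ltn_ord j; rewrite ltn_subRL. Qed.
Definition hyb_idx (pbar p : nat) (j : 'I_(p - pbar)) : 'I_p :=
  Ordinal (hyb_idx_subproof j).

Variables (p m L : nat).

Definition Hmos (T : 'I_p -> nat) (z : 'I_p -> nat -> 'cV[R]_m)
    (alpha : 'I_p -> R) : 'M[R]_(L * m, \sum_(i < p) (T i - L + 1)) :=
  \mxrow_(i < p) (alpha i *: hankel L (T i) (z i)).

Definition Hcum (T0 : nat) (z : 'I_p -> nat -> 'cV[R]_m) (alpha : 'I_p -> R)
    : 'M[R]_(L * m, T0 - L + 1) :=
  \sum_(i < p) alpha i *: hankel L T0 (z i).

Definition Hhyb (pbar T0 : nat) (T : 'I_p -> nat) (z : 'I_p -> nat -> 'cV[R]_m)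
    (alpha : 'I_p -> R)
    : 'M[R]_(L * m, (T0 - L + 1) + \sum_(j < p - pbar) (T (hyb_idx j) - L + 1)) :=
  row_mx (\sum_(i < p | (i < pbar)%N) alpha i *: hankel L T0 (z i))
         (\mxrow_(j < p - pbar)
            (alpha (hyb_idx j) *: hankel L (T (hyb_idx j)) (z (hyb_idx j)))).

Definition MCPE (T : 'I_p -> nat) (z : 'I_p -> nat -> 'cV[R]_m) : Prop :=
  forall alpha : 'I_p -> R, (forall i, alpha i != 0) ->
    \rank (Hmos T z alpha) = (m * L)%N.

Definition CCPE (T0 : nat) (z : 'I_p -> nat -> 'cV[R]_m) : Prop :=
  forall alpha : 'I_p -> R, (forall i, alpha i != 0) ->
    \rank (Hcum T0 z alpha) = (m * L)%N.

Definition HCPE (pbar T0 : nat) (T : 'I_p -> nat) (z : 'I_p -> nat -> 'cV[R]_m)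
    : Prop :=
  forall alpha : 'I_p -> R, (forall i, alpha i != 0) ->
    \rank (Hhyb pbar T0 T z alpha) = (m * L)%N.

(* 1_p (x) I_{T0-L+1}, written as a vertical stack of p identity blocks
   (block i has T_i - L + 1 = T0 - L + 1 rows when T_i = T0). *)
Definition Kcum (T0 : nat) (T : 'I_p -> nat)
    : 'M[R]_(\sum_(i < p) (T i - L + 1), T0 - L + 1) :=
  \mxcol_(i < p) eyemx (T i - L + 1) (T0 - L + 1).

(* [ 1_pbar (x) I_{T0-L+1}   0 ;  0   I_S ],  S = sum_{i>pbar} (T_i - L + 1) *)
Definition Khyb (pbar T0 : nat) (T : 'I_p -> nat)
    : 'M[R]_(\sum_(i < p) (T i - L + 1),
             (T0 - L + 1) + \sum_(j < p - pbar) (T (hyb_idx j) - L + 1)) :=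
  \mxcol_(i < p)
    row_mx (if (i < pbar)%N then eyemx (T i - L + 1) (T0 - L + 1) else 0)
           (\mxrow_(j < p - pbar)
               (if i == hyb_idx j then eyemx (T i - L + 1) (T (hyb_idx j) - L + 1)
                else 0)).

(* 1_{p - pbar + 1} (x) I_{T0-L+1}, as a stack of p - pbar + 1 identity blocks *)
Definition Khyb_cum (pbar T0 : nat) (T : 'I_p -> nat)
    : 'M[R]_((T0 - L + 1) + \sum_(j < p - pbar) (T (hyb_idx j) - L + 1),
             T0 - L + 1) :=
  col_mx (eyemx (T0 - L + 1) (T0 - L + 1))
         (\mxcol_(j < p - pbar) eyemx (T (hyb_idx j) - L + 1) (T0 - L + 1)).

End Defs.

Arguments Kcum {R p} L T0 T.
Arguments Khyb {R p} L pbar T0 T.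
Arguments Khyb_cum {R p} L pbar T0 T.

(* Main.v *)
Require Import Defs.
From HB Require Import structures.
From mathcomp Require Import all_boot all_order all_algebra.
From mathcomp Require Import reals.
Import Order.TTheory GRing.Theory Num.Theory.
Local Open Scope ring_scope.
From mathcomp Require Import zify.

Section Helpers.
Variable R : realType.

Lemma eyemx1 n : eyemx R n n = 1%:M.
Proof. by apply/matrixP=> a b; rewrite !mxE. Qed.

Lemma hankel_eye m L n T0 (z : nat -> 'cV[R]_m) : n = T0 ->
  hankel L n z *m eyemx R (n - L + 1) (T0 - L + 1) = hankel L T0 z.
Proof. by move=> ->; rewrite eyemx1 mulmx1. Qed.

Lemma sum_row_mx (I : finType) (P : pred I) m n1 n2
    (A : I -> 'M[R]_(m, n1)) (B : I -> 'M[R]_(m, n2)) :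
  \sum_(i | P i) row_mx (A i) (B i) =
  row_mx (\sum_(i | P i) A i) (\sum_(i | P i) B i).
Proof.
apply: (big_rec3 (fun x y z => x = row_mx y z)) => [|i x y w _ ->].
  by rewrite row_mx0.
by rewrite add_row_mx.
Qed.

Lemma rank_mul_full n k l (A : 'M[R]_(n, k)) (B : 'M[R]_(k, l)) :
  \rank (A *m B) = n -> \rank A = n.
Proof.
by move=> h; apply/eqP; rewrite eqn_leq rank_leq_row -{1}h mxrankM_maxl.
Qed.

Lemma rank_mul_ker n k l (A : 'M[R]_(n, k)) (B : 'M[R]_(k, l)) :
  \rank A = n ->
  (forall v : 'rV_k, (v <= A)%MS -> (v <= kermx B)%MS -> v = 0) ->
  \rank (A *m B) = n.
Proof.
move=> hA hv.
have fA : row_free A by rewrite /row_free hA.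
suff : row_free (A *m B) by move/eqP.
apply: inj_row_free => u hu.
have : u *m A = 0.
  apply: hv; first exact: submxMl.
  by apply/sub_kermxP; rewrite -mulmxA.
by move/eqP; rewrite mulmx_free_eq0 // => /eqP.
Qed.

Lemma sum_hyb (V : nmodType) (p pbar : nat) (f : 'I_p -> V) :
  \sum_(j < p - pbar) f (hyb_idx j) = \sum_(i < p | ~~ (i < pbar)%N) f i.
Proof.
have inj : injective (@hyb_idx pbar p).
  by move=> a b /(congr1 val) /= /addnI /val_inj.
transitivity (\sum_(j in [set: 'I_(p - pbar)]) f (hyb_idx j)).
  by apply: eq_bigl => j; rewrite inE.
rewrite -(big_imset _ (in2W inj)); apply: eq_bigl => i.
apply/imsetP/idP => [[j _ ->]|h]; first by rewrite /= -leqNgt leq_addr.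
have hj : (i - pbar < p - pbar)%N.
  have := ltn_ord i; move: h; rewrite -leqNgt; lia.
exists (Ordinal hj); first by rewrite inE.
apply/val_inj => /=; move: h; rewrite -leqNgt; lia.
Qed.

Variables (p m L : nat) (T : 'I_p -> nat) (z : 'I_p -> nat -> 'cV[R]_m).

Lemma Hcum_mos T0 alpha : (forall i, T i = T0) ->
  Hcum L T0 z alpha = Hmos L T z alpha *m Kcum L T0 T.
Proof.
move=> hT; rewrite /Hmos /Kcum mul_mxrow_mxcol /Hcum; apply: eq_bigr => i _.
by rewrite -scalemxAl hankel_eye.
Qed.

Lemma Hhyb_mos pbar T0 alpha : (forall i : 'I_p, (i < pbar)%N -> T i = T0) ->
  Hhyb L pbar T0 T z alpha = Hmos L T z alpha *m Khyb L pbar T0 T.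
Proof.
move=> hT; rewrite /Hmos /Khyb mul_mxrow_mxcol.
rewrite (eq_bigr (fun i => row_mx
   ((alpha i *: hankel L (T i) (z i)) *m
      (if (i < pbar)%N then eyemx R (T i - L + 1) (T0 - L + 1) else 0))
   (\mxrow_j ((alpha i *: hankel L (T i) (z i)) *m
      (if i == hyb_idx j then eyemx R (T i - L + 1) (T (hyb_idx j) - L + 1)
       else 0)))));
  last by move=> i _; rewrite mul_mx_row mul_mxrow.
rewrite sum_row_mx -mxrow_sum /Hhyb; congr row_mx.
  rewrite big_mkcond; apply: eq_bigr => i _; case: ifP => h.
    by rewrite -scalemxAl hankel_eye // hT.
  by rewrite mulmx0.
apply: eq_mxrow => j.
rewrite (bigD1 (hyb_idx j)) //= eqxx big1 ?addr0.
  by rewrite eyemx1 mulmx1.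
by move=> i /negbTE ->; rewrite mulmx0.
Qed.

Lemma Hcum_hyb pbar T0 alpha : (forall i, T i = T0) ->
  Hcum L T0 z alpha = Hhyb L pbar T0 T z alpha *m Khyb_cum L pbar T0 T.
Proof.
move=> hT; rewrite /Hhyb /Khyb_cum mul_row_col eyemx1 mulmx1 mul_mxrow_mxcol.
under [X in _ = _ + X]eq_bigr do rewrite -scalemxAl hankel_eye //.
rewrite (@sum_hyb _ p pbar (fun i => alpha i *: hankel L T0 (z i))).
by rewrite /Hcum (bigID (fun i : 'I_p => (i < pbar)%N)).
Qed.

End Helpers.

Theorem theorem1 (R : realType) (p m L : nat) (T : 'I_p -> nat)
    (z : 'I_p -> nat -> 'cV[R]_m) :
  (2 <= p)%N -> (1 <= L)%N -> (forall i, L <= T i)%N ->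
  [/\
   (* 1) CCPE ==> MCPE and HCPE *)
   (forall T0 : nat, (forall i, T i = T0) -> CCPE L T0 z ->
      MCPE L T z /\
      (forall pbar : nat, (0 < pbar < p)%N -> HCPE L pbar T0 T z)),
   (* 2) MCPE ==> ... *)
   (MCPE L T z ->
      (forall T0 : nat, (forall i, T i = T0) ->
         (forall alpha : 'I_p -> R, (forall i, alpha i != 0) ->
            forall v : 'rV_ _, (v <= Hmos L T z alpha)%MS -> (v <= kermx (Kcum L T0 T))%MS -> v = 0) ->
         CCPE L T0 z)
      /\
      (forall (T0 pbar : nat), (1 <= pbar < p)%N ->
         (forall i : 'I_p, (i < pbar)%N -> T i = T0) ->
         (forall alpha : 'I_p -> R, (forall i, alpha i != 0) ->
            forall v : 'rV_ _, (v <= Hmos L T z alpha)%MS -> (v <= kermx (Khyb L pbar T0 T))%MS -> v = 0) ->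
         HCPE L pbar T0 T z))
   &
   (* 3) HCPE ==> ... *)
   (forall (T0 pbar : nat), (1 <= pbar < p)%N ->
      (forall i : 'I_p, (i < pbar)%N -> T i = T0) ->
      HCPE L pbar T0 T z ->
      MCPE L T z /\
      ((forall j : 'I_(p - pbar), T (hyb_idx j) = T0) ->
       (forall alpha : 'I_p -> R, (forall i, alpha i != 0) ->
          forall v : 'rV_ _, (v <= Hhyb L pbar T0 T z alpha)%MS -> (v <= kermx (Khyb_cum L pbar T0 T))%MS -> v = 0) ->
       CCPE L T0 z))].
Proof.
move=> hp hL hTL; split.
- move=> T0 hT hC; split.
    move=> a ha; rewrite [(m * L)%N]mulnC; apply: (@rank_mul_full _ _ _ _ _ (Kcum L T0 T)).
    by rewrite -Hcum_mos // (hC a ha) mulnC.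
  move=> pbar hpb a ha; rewrite [(m * L)%N]mulnC.
  apply: (@rank_mul_full _ _ _ _ _ (Khyb_cum L pbar T0 T)).
  by rewrite -Hcum_hyb // (hC a ha) mulnC.
- move=> hM; split.
    move=> T0 hT hK a ha; rewrite (@Hcum_mos _ p m L T z T0 a hT) [(m * L)%N]mulnC.
    by apply: rank_mul_ker; [exact: (etrans (hM a ha) (mulnC m L)) | exact: hK].
  move=> T0 pbar hpb hT hK a ha; rewrite (@Hhyb_mos _ p m L T z pbar T0 a hT) [(m * L)%N]mulnC.
  by apply: rank_mul_ker; [exact: (etrans (hM a ha) (mulnC m L)) | exact: hK].
- move=> T0 pbar hpb hT hH; split.
    move=> a ha; rewrite [(m * L)%N]mulnC; apply: (@rank_mul_full _ _ _ _ _ (Khyb L pbar T0 T)).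
    by rewrite -Hhyb_mos // (hH a ha) mulnC.
  move=> hT' hK a ha.
  have hall : forall i, T i = T0.
    move=> i; case: (ltnP i pbar) => h; first exact: hT.
    have hj : (i - pbar < p - pbar)%N by have := ltn_ord i; lia.
    rewrite (_ : i = hyb_idx (Ordinal hj)); first exact: hT'.
    by apply/val_inj => /=; lia.
  rewrite (@Hcum_hyb _ p m L T z pbar T0 a hall) [(m * L)%N]mulnC.
  by apply: rank_mul_ker; [exact: (etrans (hH a ha) (mulnC m L)) | exact: hK].
Qed.
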